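(* Let $k\ge2$, and let $\mathcal P=\{p_1,\dots,p_{k^2}\}$ be a family of homogeneous real polynomials in the commuting variables $x_1,\dots,x_{2k^2}$ admitting an nc representation $p(X,Y)$ of degree $d>1$. Let $a\ne b$ and suppose $x_i$ is the $(a,a)$ entry of $X$, $x_j$ is the $(a,b)$ entry of $X$, and $x_\ell$ is the $(b,b)$ entry of $X$. If $\varphi(n,0)\ne0$ for some $n\ge2$, then exactly one polynomial of the family contains the monomials $\varphi(n,0)x_i^{n-1}x_j$ and $\varphi(n,0)x_jx_\ell^{n-1}$, and this polynomial is in position $(a,b)$ of the array $p(X,Y)$.
   Context: The family $\mathcal P$ admits an nc representation $p(X,Y)$ if there are $k\times k$ matrices $X,Y$ whose $2k^2$ entries are the variables $x_1,\dots,x_{2k^2}$, each used exactly once, and a noncommutative polynomial $p$ in two letters with real coefficients such that the matrix $p(X,Y)$ is a $k\times k$ array whose entries are $p_1,\dots,p_{k^2}$, each exactly once. $\varphi(i,j)$ is the sum of coefficients of all monomials of $p$ of degree $i$ in $X$ and $j$ in $Y$. *)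

(* Defs.v *)
From HB Require Import structures.
From mathcomp Require Import all_boot all_order all_algebra.
From mathcomp Require Import reals.
From mathcomp Require Import mpoly.

Set Implicit Arguments.
Unset Strict Implicit.
Unset Printing Implicit Defensive.

Import Order.TTheory GRing.Theory Num.Theory.
Local Open Scope ring_scope.

(* A noncommutative polynomial in two letters X (encoded [false]) and
   Y (encoded [true]) with coefficients in R: a finitely supported
   coefficient function on words. *)
Record ncpoly (R : nzRingType) := NCPoly {
  nccoef : seq bool -> R;
  ncsupp : seq (seq bool);
  ncsupp_uniq : uniq ncsupp;
  ncsuppP : forall w, nccoef w != 0 -> w \in ncsupp
}.

Definition ncdeg (R : nzRingType) (p : ncpoly R) : nat :=
  \max_(w <- ncsupp p | nccoef p w != 0%R) size w.

Definition ncphi (R : nzRingType) (p : ncpoly R) (i j : nat) : R :=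
  \sum_(w <- ncsupp p | (count negb w == i) && (count id w == j)) nccoef p w.

Definition word_eval (A : nzRingType) (k : nat) (X Y : 'M[A]_k) (w : seq bool)
  : 'M[A]_k :=
  foldr (fun b M => (if b then Y else X) *m M) 1%:M w.

Definition nceval (R : nzRingType) (A : lalgType R) (k : nat) (p : ncpoly R)
  (X Y : 'M[A]_k) : 'M[A]_k :=
  \matrix_(r, c) \sum_(w <- ncsupp p) nccoef p w *: word_eval X Y w r c.

Definition mhomog (R : nzRingType) (n : nat) (q : {mpoly R[n]}) : Prop :=
  exists dd : nat, forall m, m \in msupp q -> mdeg m = dd.

Definition genX (R : nzRingType) (k : nat)
  (e : ('I_k * 'I_k) + ('I_k * 'I_k) -> 'I_(2 * k ^ 2)) : 'M[{mpoly R[2 * k ^ 2]}]_k :=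
  \matrix_(r, c) 'X_(e (inl (r, c))).
Definition genY (R : nzRingType) (k : nat)
  (e : ('I_k * 'I_k) + ('I_k * 'I_k) -> 'I_(2 * k ^ 2)) : 'M[{mpoly R[2 * k ^ 2]}]_k :=
  \matrix_(r, c) 'X_(e (inr (r, c))).

(* Main.v *)
Require Import Defs.
From HB Require Import structures.
From mathcomp Require Import all_boot all_order all_algebra.
From mathcomp Require Import reals.
From mathcomp Require Import mpoly.

Import Order.TTheory GRing.Theory Num.Theory.
Local Open Scope ring_scope.

Section S.
Variables (R : realType) (k : nat) (e : ('I_k * 'I_k) + ('I_k * 'I_k) -> 'I_(2 * k ^ 2)).
Hypothesis einj : injective e.
Local Notation N := (2 * k ^ 2)%N.
Local Notation W w := (word_eval (genX R e) (genY R e) w).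

Lemma mcoeffXMg (p : {mpoly R[N]}) v mm :
  ('X_v * p)@_mm = if (0 < mm v)%N then p@_(mm - U_(v))%MM else 0.
Proof.
rewrite mulrC; case: ifP => h.
  have le : (U_(v) <= mm)%MM.
    by apply/mnm_lepP => x; rewrite mnm1E; case: eqP => [<-|].
  by rewrite -{1}(submK le) addmC mcoeffMX.
apply/eqP; rewrite mcoeff_eq0; apply/negP.
rewrite (perm_mem (msuppMX _ _)) => /mapP [m' _ mE].
by move: h; rewrite mE mnmDE mnm1E eqxx.
Qed.

Lemma W_nil r c : W [::] r c = (r == c)%:R.
Proof. by rewrite /word_eval /= mxE. Qed.

Lemma W_cons b w r c : W (b :: w) r c =
  \sum_q 'X_(e (if b then inr (r, q) else inl (r, q))) * W w q c.
Proof.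
rewrite /word_eval /= mxE; apply: eq_bigr => q _.
by case: b; rewrite /genX /genY !mxE.
Qed.

Lemma coef_cons b w r c mm : (W (b :: w) r c)@_mm =
  \sum_q (if (0 < mm (e (if b then inr (r, q) else inl (r, q))))%N
          then (W w q c)@_(mm - U_(e (if b then inr (r, q) else inl (r, q))))%MM
          else 0).
Proof.
rewrite W_cons raddf_sum; apply: eq_bigr => q _.
exact: mcoeffXMg.
Qed.

Lemma coef_nil r c mm : (W [::] r c)@_mm = ((r == c) && (mm == 0%MM))%:R.
Proof.
rewrite W_nil; case: (r == c) => /=; last by rewrite mcoeff0.
by rewrite mcoeff1.
Qed.


Lemma xv_eq u v r q : (e (inl (u, v)) == e (inl (r, q))) = (u == r) && (v == q).
Proof. by rewrite (inj_eq einj). Qed.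

Lemma xy_neq u v r q : (e (inl (u, v)) == e (inr (r, q))) = false.
Proof. by rewrite (inj_eq einj). Qed.

Lemma mulmn_eq0 (x : 'I_N) s : ((U_(x) *+ s)%MM == 0%MM) = (s == 0)%N.
Proof.
apply/eqP/eqP => [/mnmP/(_ x)|->].
  by rewrite mulmnE mnm1E eqxx mul1n mnm0E.
by apply/mnmP => y; rewrite mulmnE muln0 ?mnmE.
Qed.

Lemma addUK (x : 'I_N) m : (U_(x) + m - U_(x))%MM = m.
Proof. by rewrite addmC addmK. Qed.

Lemma coef_loop u s w r c :
  (W w r c)@_(U_(e (inl (u, u))) *+ s)%MM =
  ((w == nseq s false) && (r == c) && ((s == 0)%N || (r == u)))%:R.
Proof.
elim: w s r => [|b w IH] s r.
  rewrite coef_nil mulmn_eq0; case: s => [|s] /=; first by rewrite andbT.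
  by rewrite andbF.
rewrite coef_cons; case: b.
  rewrite big1 => [|q _]; last by rewrite mulmnE mnm1E xy_neq.
  by case: s.
case: s => [|s].
  by rewrite big1 // => q _; rewrite mulmnE muln0.
case: (eqVneq r u) => [->|ne].
  rewrite (bigD1 u) //= big1 => [|q /negbTE qr]; last first.
    by rewrite mulmnE mnm1E xv_eq eqxx eq_sym qr.
  rewrite mulmnE mnm1E eqxx mul1n /= mulmS addUK IH addr0 eqseq_cons eqxx /=.
  by rewrite !orbT !andbT.
rewrite big1 => [|q _]; last by rewrite mulmnE mnm1E xv_eq eq_sym (negbTE ne).
by rewrite andbF.
Qed.

Variables (a b : 'I_k).
Hypothesis hab : a != b.

Lemma coef_B s w r c :
  (W w r c)@_(U_(e (inl (a, a))) *+ s + U_(e (inl (a, b))))%MM =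
  ((w == nseq s.+1 false) && (r == a) && (c == b))%:R.
Proof.
elim: w s r => [|x w IH] s r.
  by rewrite coef_nil mnmD_eq0 mnm1_eq0 !andbF.
rewrite coef_cons; case: x.
  rewrite big1 => [//|q _].
  by rewrite mnmDE mulmnE !mnm1E !xy_neq.
case: (eqVneq a r) => [<-|ne]; last first.
  rewrite big1 => [|q _]; last by rewrite mnmDE mulmnE !mnm1E !xv_eq (negbTE ne).
  by rewrite andbF.
rewrite (bigD1 a) //= (bigD1 b) /=; last by rewrite eq_sym.
rewrite big1 => [|q /andP [qa qb]]; last first.
  by rewrite mnmDE mulmnE !mnm1E !xv_eq !eqxx /= eq_sym (negbTE qa) eq_sym (negbTE qb).
rewrite addr0 !mnmDE !mulmnE !mnm1E !xv_eq !eqxx /=.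
rewrite [b == a]eq_sym (negbTE hab) mul1n addn0 mul0n add0n /= addmK coef_loop.
rewrite eqseq_cons eqxx /= andbT [b == a]eq_sym (negbTE hab) orbF.
case: s => [|s] /=.
  by rewrite add0r andbT [b == c]eq_sym.
by rewrite mulmS -addmA addUK IH eqxx andbF addr0 !andbT.
Qed.

Lemma coef_D t w r c :
  (W w r c)@_(U_(e (inl (a, b))) + U_(e (inl (b, b))) *+ t)%MM =
  ((w == nseq t.+1 false) && (r == a) && (c == b))%:R.
Proof.
elim: w t r => [|x w IH] t r.
  by rewrite coef_nil mnmD_eq0 mnm1_eq0 !andbF.
rewrite coef_cons; case: x.
  rewrite big1 => [//|q _].
  by rewrite mnmDE mulmnE !mnm1E !xy_neq.
case: (eqVneq a r) => [<-|ne1].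
  rewrite (bigD1 b) //= big1 => [|q /negbTE qb]; last first.
    by rewrite mnmDE mulmnE !mnm1E !xv_eq !eqxx /= eq_sym qb andbF.
  rewrite mnmDE mulmnE !mnm1E !xv_eq !eqxx /= addUK coef_loop.
  by rewrite addr0 eqseq_cons eqxx /= ?orbT ?andbT [b == c]eq_sym.
case: (eqVneq b r) => [<-|ne2].
  rewrite (bigD1 b) //= big1 => [|q /negbTE qb]; last first.
    by rewrite mnmDE mulmnE !mnm1E !xv_eq !eqxx /= [b == q]eq_sym qb andbF.
  rewrite mnmDE mulmnE !mnm1E !xv_eq !eqxx /= (negbTE hab) mul1n add0n addr0 andbF.
  case: t => [|t] //=.
  by rewrite mulmS addmA [(_ + U_(_))%MM]addmC -addmA addUK IH [b == a]eq_sym (negbTE hab) andbF.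
rewrite big1 => [|q _]; last by rewrite mnmDE mulmnE !mnm1E !xv_eq (negbTE ne1) (negbTE ne2).
by rewrite andbF.
Qed.

End S.

Lemma cnt_nseq (w : seq bool) n :
  (count negb w == n) && (count id w == 0)%N = (w == nseq n false).
Proof.
elim: w n => [|x w IH] [|n] //=; case: x => /=; rewrite ?add0n ?add1n ?andbF //.
by rewrite eqSS IH.
Qed.

Theorem lemma4p2 (R : realType) (k : nat) (hk : (2 <= k)%N)
  (P : 'I_(k ^ 2) -> {mpoly R[2 * k ^ 2]})
  (hP : forall m, mhomog (P m))
  (e : ('I_k * 'I_k) + ('I_k * 'I_k) -> 'I_(2 * k ^ 2)) (he : bijective e)
  (p : ncpoly R) (d : nat) (hd : ncdeg p = d) (hd1 : (1 < d)%N)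
  (sigma : 'I_k * 'I_k -> 'I_(k ^ 2)) (hsigma : bijective sigma)
  (hrep : forall r c : 'I_k,
      nceval p (genX R e) (genY R e) r c = P (sigma (r, c)))
  (a b : 'I_k) (hab : a != b) (i j l : 'I_(2 * k ^ 2))
  (hi : e (inl (a, a)) = i) (hj : e (inl (a, b)) = j) (hl : e (inl (b, b)) = l)
  (n : nat) (hn : (2 <= n)%N) (hphi : ncphi p n 0 != 0) :
  forall m : 'I_(k ^ 2),
    ((P m)@_(U_(i) *+ (n - 1) + U_(j))%MM = ncphi p n 0 /\
     (P m)@_(U_(j) + U_(l) *+ (n - 1))%MM = ncphi p n 0)
    <-> m = sigma (a, b).

Proof.
move=> m.
have einj : injective e := bij_inj he.
have sinj := bij_inj hsigma.
case: hsigma => g sg gs.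
have [[r c] ->] : exists rc, m = sigma rc by exists (g m); rewrite gs.
subst i j l.
have [s sE] : exists s, n = s.+1 by exists n.-1; rewrite prednK // ltnW.
subst n; rewrite subn1 /=.
have key : forall mm,
  (forall w r c, (word_eval (genX R e) (genY R e) w r c)@_mm =
     ((w == nseq s.+1 false) && (r == a) && (c == b))%:R) ->
  forall r c, (P (sigma (r, c)))@_mm = ncphi p s.+1 0 * ((r == a) && (c == b))%:R.
  move=> mm H r' c'; rewrite -hrep /nceval mxE raddf_sum.
  rewrite (eq_bigr (fun w => nccoef p w * ((w == nseq s.+1 false) && (r' == a) && (c' == b))%:R)); last by move=> w _; rewrite -H; exact: mcoeffZ.
  rewrite /ncphi mulr_suml [RHS]big_mkcond; apply: eq_bigr => w _.
  rewrite cnt_nseq; case: (w == nseq s.+1 false) => /=.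
    by [].
  by rewrite mulr0.
rewrite (key _ (@coef_B _ _ _ einj a b hab s)) (key _ (@coef_D _ _ _ einj a b hab s)).
split.
  case=> h _; move: h.
  case: eqP => [->|_]; case: eqP => [->|_] //= h; move: hphi;
    by rewrite -h mulr0 eqxx.
by move/sinj => [-> ->]; rewrite !eqxx mulr1.
Qed.
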